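(* For every $\alpha\in[0,2]$, \[ \max_{\mathbf z\in\mathcal Z} G_\alpha(\mathbf z)\;=\;\max_{\mathbf x\in\mathcal X}G_\alpha(\mathbf x), \] i.e. the integrality gap $f^{\mathrm{SU}}(\mathbf z^* )/f^{\mathrm{RSU}}(\mathbf x^* )$ between the SSA problem with uniform allocation and its relaxation equals $1$, where $G_\alpha$ is defined below.
   Context: $\mathcal U$ (users) and $\mathcal B$ (stations) are finite nonempty sets with positive rates $r_{ub}$. $\mathcal Z=\{\mathbf z\in\mathbb Z_+^{|\mathcal U|\times|\mathcal B|}:\sum_b z_{ub}=1\ \forall u\}$ and $\mathcal X=\{\mathbf x\in\mathbb R_+^{|\mathcal U|\times|\mathcal B|}:\sum_b x_{ub}=1\ \forall u\}$. For $\mathbf w\in\mathcal X$ define $G_0(\mathbf w)=\sum_{u,b} r_{ub}w_{ub}\big(1+\sum_{v\ne u}w_{vb}\big)^{-1}$; $G_1(\mathbf w)=\sum_{u,b} w_{ub}\big(\log r_{ub}-\log(1+\sum_{v\ne u} w_{vb})\big)$; for $\alpha>0,\alpha\ne1$: $G_\alpha(\mathbf w)=\frac{1}{1-\alpha}\sum_{u,b} r_{ub}^{1-\alpha}w_{ub}\big(1+\sum_{v\ne u}w_{vb}\big)^{\alpha-1}$. $f^{\mathrm{SU}}=\max_{\mathbf z\in\mathcal Z}G_\alpha(\mathbf z)$ is the single-station association problem in which each station shares its resource uniformly among its associated users and the objective is the sum of $\alpha$-fair utilities ($U_\alpha(R)=R^{1-\alpha}/(1-\alpha)$, $U_1=\log$)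 of user rates; $f^{\mathrm{RSU}}=\max_{\mathbf x\in\mathcal X}G_\alpha(\mathbf x)$ is its relaxation; $\mathbf z^*,\mathbf x^*$ denote their optimizers. *)

(* Defs.v *)
From HB Require Import structures.
From mathcomp Require Import all_boot all_order all_algebra.
From mathcomp Require Import reals exp.
Set Implicit Arguments. Unset Strict Implicit. Unset Printing Implicit Defensive.
Import Order.TTheory GRing.Theory Num.Theory.
Local Open Scope ring_scope.

Section Defs.
Variables (R : realType) (U B : finType).

Definition others (w : U -> B -> R) (u : U) (b : B) : R :=
  \sum_(v : U | v != u) w v b.

Definition in_X (w : U -> B -> R) : Prop :=
  (forall u b, 0 <= w u b) /\ (forall u, \sum_(b : B) w u b = 1).

Definition in_Z (w : U -> B -> R) : Prop :=
  (forall u b, w u b \is a Num.nat) /\ (forall u, \sum_(b : B) w u b = 1).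

Definition G0 (r : U -> B -> R) (w : U -> B -> R) : R :=
  \sum_(u : U) \sum_(b : B) r u b * w u b / (1 + others w u b).

Definition G1 (r : U -> B -> R) (w : U -> B -> R) : R :=
  \sum_(u : U) \sum_(b : B) w u b * (ln (r u b) - ln (1 + others w u b)).

Definition Galpha_gen (alpha : R) (r : U -> B -> R) (w : U -> B -> R) : R :=
  (1 - alpha)^-1 * \sum_(u : U) \sum_(b : B)
     powR (r u b) (1 - alpha) * w u b * powR (1 + others w u b) (alpha - 1).

Definition G (alpha : R) (r : U -> B -> R) (w : U -> B -> R) : R :=
  if alpha == 0 then G0 r w
  else if alpha == 1 then G1 r w
  else Galpha_gen alpha r w.

Definition is_argmax (S : (U -> B -> R) -> Prop) (f : (U -> B -> R) -> R)
    (w : U -> B -> R) : Prop :=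
  S w /\ forall w', S w' -> f w' <= f w.

End Defs.

(* Main.v *)
Require Import Defs.
From HB Require Import structures.
From mathcomp Require Import all_boot all_order all_algebra.
From mathcomp Require Import reals exp.
From mathcomp Require Import unstable interval_inference sequences convex hoelder.
From mathcomp Require Import ring lra.
From Stdlib Require Import FunctionalExtensionality.
Import Order.TTheory GRing.Theory Num.Theory.
Local Open Scope ring_scope.
Section S.
Variable R : realType.

Lemma ln_chord (y t : R) : 0 < y -> 0 <= t -> t <= 1 ->
  (1 - t) * ln y + t * ln (y + 1) <= ln (y + t).
Proof.
move=> y0 t0 t1.
have := @concave_ln R (Itv01 t0 t1) (y + 1) y _ y0.
rewrite !convRE /= /onem.
have -> : t * (y + 1) + (1 - t) * y = y + t by ring.
move=> H; rewrite addrC; apply: H; lra.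
Qed.

Lemma expR_chord (a b t : R) : 0 <= t -> t <= 1 ->
  expR ((1 - t) * a + t * b) <= (1 - t) * expR a + t * expR b.
Proof.
move=> t0 t1.
have := @convex_expR R (Itv01 t0 t1) b a.
by rewrite !convRE /= /onem addrC [X in _ <= X]addrC.
Qed.

Lemma powR_chord_neg (y t p : R) : 0 < y -> 0 <= t -> t <= 1 -> p <= 0 ->
  powR (y + t) p <= (1 - t) * powR y p + t * powR (y + 1) p.
Proof.
move=> y0 t0 t1 p0.
rewrite /powR !gt_eqF; [|lra|lra|lra].
apply: le_trans; last exact: (@expR_chord (p * ln y) (p * ln (y + 1)) t t0 t1).
rewrite ler_expR.
have := @ln_chord y t y0 t0 t1.
move=> H.
have : p * ((1 - t) * ln y + t * ln (y + 1)) >= p * ln (y + t).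
  by rewrite ler_wnM2l.
move=> H2; apply: le_trans H2 _; rewrite le_eqVlt; apply/orP; left; apply/eqP; ring.
Qed.

Lemma powR_chord_pos (y t p : R) : 0 < y -> 0 <= t -> t <= 1 -> 0 < p -> p <= 1 ->
  (1 - t) * powR y p + t * powR (y + 1) p <= powR (y + t) p.
Proof.
move=> y0 t0 t1 p0 p1.
set u := powR y p; set v := powR (y + 1) p.
have u0 : 0 <= u by apply: powR_ge0.
have v0 : 0 <= v by apply: powR_ge0.
have q1 : 1 <= p^-1 by rewrite invf_ge1.
have iv : v \in `[0, +oo[ by rewrite in_itv /= andbT.
have iu : u \in `[0, +oo[ by rewrite in_itv /= andbT.
have := @convex_powR R _ q1 (Itv01 t0 t1) v u.
move=> /(_ (classical_sets.mem_set iv) (classical_sets.mem_set iu)).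
rewrite !convRE /= /onem.
have -> : powR v p^-1 = y + 1 by rewrite /v -powRrM mulfV ?gt_eqF // powRr1 //; lra.
have -> : powR u p^-1 = y by rewrite /u -powRrM mulfV ?gt_eqF // powRr1 //; lra.
move=> H.
have w0 : 0 <= t * v + (1 - t) * u by apply: addr_ge0; apply: mulr_ge0 => //; lra.
have := @ge0_ler_powR R p (ltW p0) _ _ _ _ H.
rewrite -powRrM mulVf ?gt_eqF // powRr1 //.
have -> : t * (y + 1) + (1 - t) * y = y + t by ring.
rewrite [conv _ _ _](_ : _ = t * v + (1 - t) * u) // => K; rewrite addrC; apply: K.
- by rewrite nnegrE powR_ge0.
- by rewrite nnegrE; lra.
Qed.

Lemma inv_chord (y t : R) : 0 < y -> 0 <= t -> t <= 1 ->
  (y + t)^-1 <= (1 - t) * y^-1 + t * (y + 1)^-1.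
Proof.
move=> y0 t0 t1.
rewrite -subr_ge0.
have -> : (1 - t) * y^-1 + t * (y + 1)^-1 - (y + t)^-1 =
   t * (1 - t) / (y * (y + 1) * (y + t)).
  field; apply/and3P; split; apply/eqP; lra.
apply: divr_ge0; first by apply: mulr_ge0; lra.
apply: mulr_ge0; [apply: mulr_ge0|]; lra.
Qed.
End S.

Section Gen.
Variables (R : realType) (U B : finType).
Implicit Types (x w : U -> B -> R).

Definition GF (phi : U -> B -> R -> R) w : R :=
  \sum_(u : U) \sum_(b : B) w u b * phi u b (1 + others w u b).

Definition chordP (phi : U -> B -> R -> R) := forall u b y t,
  1 <= y -> 0 <= t -> t <= 1 ->
  phi u b (y + t) <= (1 - t) * phi u b y + t * phi u b (y + 1).

Definition upd x (u0 : U) (y : B -> R) : U -> B -> R :=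
  fun u b => if u == u0 then y b else x u b.

Definition isunit x u := exists b, forall b', x u b' = (b' == b)%:R.

Lemma exists_argmax (T : finType) (t0 : T) (F : T -> R) :
  exists i, forall j, F j <= F i.
Proof.
case: (@arg_maxP _ _ T t0 xpredT F isT) => i _ H.
by exists i => j; apply: H.
Qed.

Lemma sum_ind (b0 : B) : \sum_(b : B) ((b == b0)%:R : R) = 1.
Proof.
rewrite (bigD1 b0) //= eqxx big1 ?addr0 // => b /negbTE ->; by [].
Qed.

Lemma step (phi : U -> B -> R -> R) x u0 (b0 : B) : chordP phi -> in_X x ->
  exists bs, GF phi x <= GF phi (upd x u0 (fun b => (b == bs)%:R)).
Proof.
move=> Hphi [Hx0 Hx1].
pose c u b := \sum_(v | (v != u) && (v != u0)) x v b.
pose g b s := s * phi u0 b (1 + others x u0 b)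
   + \sum_(u | u != u0) x u b * phi u b (1 + c u b + s).
have decomp : forall y, GF phi (upd x u0 y) = \sum_b g b (y b).
  move=> y; rewrite /GF exchange_big /=; apply: eq_bigr => b _.
  rewrite (bigD1 u0) //= /g /upd eqxx; congr (_ + _).
    congr (_ * _); congr (phi _ _ (_ + _)); apply: eq_bigr => v /negbTE ->; by [].
  apply: eq_bigr => u /negbTE uu0; rewrite uu0.
  congr (_ * _); congr (phi _ _ _); rewrite /others (bigD1 u0) /=; last by rewrite eq_sym uu0.
  rewrite eqxx [y b + _]addrC addrA; congr (_ + _ + _).
  by apply: eq_bigr => v /andP[_ /negbTE ->].
have updx : upd x u0 (x u0) = x.
  apply: functional_extensionality => u; apply: functional_extensionality => b.
  by rewrite /upd; case: eqP => // ->.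
have gchord : forall b s, 0 <= s -> s <= 1 ->
    g b s <= (1 - s) * g b 0 + s * g b 1.
  move=> b s s0 s1; rewrite /g.
  have H : \sum_(u | u != u0) x u b * phi u b (1 + c u b + s) <=
      (1 - s) * \sum_(u | u != u0) x u b * phi u b (1 + c u b + 0)
      + s * \sum_(u | u != u0) x u b * phi u b (1 + c u b + 1).
    rewrite !mulr_sumr -big_split /=; apply: ler_sum => u _.
    have c0 : 0 <= c u b by apply: sumr_ge0 => v _; apply: Hx0.
    have := Hphi u b (1 + c u b) s ltac:(lra) s0 s1.
    rewrite addr0 => Hc.
    apply: le_trans (ler_wpM2l (Hx0 u b) Hc) _.
    rewrite le_eqVlt; apply/orP; left; apply/eqP; ring.
  apply: le_trans (lerD (lexx _) H) _.
  rewrite le_eqVlt; apply/orP; left; apply/eqP; ring.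
pose d b := g b 1 - g b 0.
have [bs Hbs] := @exists_argmax _ b0 d.
exists bs; rewrite -{1}updx !decomp.
have x1 : forall b, x u0 b <= 1.
  move=> b; have := Hx1 u0; rewrite (bigD1 b) //=.
  have : 0 <= \sum_(i | i != b) x u0 i by apply: sumr_ge0 => i _; apply: Hx0.
  lra.
apply: le_trans (_ : _ <= \sum_b (g b 0 + x u0 b * d b)) _.
  apply: ler_sum => b _; apply: le_trans (gchord b _ (Hx0 u0 b) (x1 b)) _.
  rewrite /d le_eqVlt; apply/orP; left; apply/eqP; ring.
rewrite big_split /=.
apply: le_trans (_ : _ <= \sum_b g b 0 + d bs) _.
  apply: lerD => //; apply: le_trans (_ : _ <= \sum_b x u0 b * d bs) _.
    by apply: ler_sum => b _; apply: ler_wpM2l.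
  by rewrite -mulr_suml Hx1 mul1r.
rewrite (bigD1 bs) //= [X in _ <= X](bigD1 bs) //= eqxx.
have -> : \sum_(i | i != bs) g i ((i == bs)%:R) = \sum_(i | i != bs) g i 0.
  by apply: eq_bigr => i /negbTE ->.
rewrite /d le_eqVlt; apply/orP; left; apply/eqP; ring.
Qed.

Lemma iter_step (phi : U -> B -> R -> R) (b0 : B) : chordP phi ->
  forall (s : seq U) x, in_X x ->
  exists x', [/\ in_X x', GF phi x <= GF phi x' & forall u, u \in s -> isunit x' u].
Proof.
move=> Hphi; elim=> [|u0 s IH] x Hx.
  by exists x; split.
have [x1 [Hx1 Hle1 Hu1]] := IH x Hx.
have [bs Hbs] := @step phi x1 u0 b0 Hphi Hx1.
exists (upd x1 u0 (fun b => (b == bs)%:R)); split.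
- split.
    by move=> u b; rewrite /upd; case: (u == u0) => //; case: Hx1 => H _; apply: H.
  by move=> u; rewrite /upd; case: (u == u0); [apply: sum_ind|case: Hx1].
- exact: le_trans Hle1 Hbs.
- move=> u; case: (eqVneq u u0) => [->|neq] Hu.
    by exists bs => b'; rewrite /upd eqxx.
  move: Hu; rewrite in_cons (negbTE neq) /= => us.
  have [b Hb] := Hu1 u us; exists b => b'; rewrite /upd (negbTE neq); exact: Hb.
Qed.

Lemma unit_inZ x : (forall u, isunit x u) -> in_Z x.
Proof.
move=> H; split.
  by move=> u b; have [b1 ->] := H u; apply: natr_nat.
by move=> u; have [b1 Hb] := H u; rewrite (eq_bigr _ (fun b _ => Hb b)) sum_ind.
Qed.

Lemma inZ_inX x : in_Z x -> in_X x.
Proof. by case=> H1 H2; split => // u b; apply: natr_ge0. Qed.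

Lemma inZ_unit x : in_Z x -> forall u, isunit x u.
Proof.
case=> Hn Hs u.
have H0 : forall b, 0 <= x u b by move=> b; apply: natr_ge0.
case: (pickP (fun b => x u b != 0)) => [b Hb|Hnone]; last first.
  have := Hs u; rewrite big1 => [/eqP|b _]; first by rewrite eq_sym oner_eq0.
  by have := Hnone b => /negbFE/eqP.
have [n En] := natrP (Hn u b).
have xb1 : 1 <= x u b.
  rewrite En ler1n; move: Hb; rewrite En; case: n {En} => //.
  by rewrite eqxx.
have := Hs u; rewrite (bigD1 b) //= => Hsum.
have Hr0 : 0 <= \sum_(i | i != b) x u i by apply: sumr_ge0.
have Hr : \sum_(i | i != b) x u i = 0 by lra.
have xb : x u b = 1 by lra.
exists b => b'; case: (eqVneq b' b) => [->|nb]; first by rewrite xb.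
have /psumr_eq0P := Hr; move=> /(_ (fun i _ => H0 i)) /(_ b' nb) ->; by [].
Qed.

Lemma Zmax (F : (U -> B -> R) -> R) (b0 : B) :
  exists z, in_Z z /\ forall z', in_Z z' -> F z' <= F z.
Proof.
pose unitize (f : {ffun U -> B}) := fun u b => ((b == f u)%:R : R).
have [fs Hfs] := @exists_argmax _ [ffun=> b0] (fun f => F (unitize f)).
exists (unitize fs); split.
  by apply: unit_inZ => u; exists (fs u).
move=> z Hz.
pose f := [ffun u => odflt b0 [pick b | z u b == 1]].
have -> : z = unitize f; last exact: Hfs.
have Hu := @inZ_unit z Hz.
apply: functional_extensionality => u; apply: functional_extensionality => b.
have [b1 Hb1] := Hu u.
rewrite /unitize /f ffunE Hb1.
case: pickP => /=; last first.
  by move=> Hn; have := Hn b1; rewrite Hb1 eqxx /= eqxx.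
move=> b2 /eqP; rewrite Hb1.
case: (eqVneq b2 b1) => [->|ne] //.
by move=> /eqP; rewrite eq_sym /= oner_eq0.
Qed.
End Gen.
Arguments GF {R U B}.
Arguments chordP {R U B}.
Arguments unit_inZ {R U B x}.
Arguments inZ_inX {R U B x}.

Section Phi.
Variables (R : realType) (U B : finType).

Definition phiG (alpha : R) (r : U -> B -> R) : U -> B -> R -> R :=
  if alpha == 0 then fun u b y => r u b / y
  else if alpha == 1 then fun u b y => ln (r u b) - ln y
  else fun u b y => (1 - alpha)^-1 * powR (r u b) (1 - alpha) * powR y (alpha - 1).

Lemma G_GF alpha r w : G alpha r w = GF (phiG alpha r) w.
Proof.
rewrite /G /GF /phiG; case: (alpha == 0).
  rewrite /G0; apply: eq_bigr => u _; apply: eq_bigr => b _.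
  by rewrite mulrA [w u b * _]mulrC.
case: (alpha == 1) => //.
rewrite /Galpha_gen mulr_sumr; apply: eq_bigr => u _.
rewrite mulr_sumr; apply: eq_bigr => b _; ring.
Qed.

Lemma chord_phiG alpha r : (forall u b, 0 < r u b) -> 0 <= alpha -> alpha <= 2 ->
  chordP (phiG alpha r).
Proof.
move=> Hr a0 a2 u b y t y1 t0 t1; rewrite /phiG.
have y0 : 0 < y by lra.
case: eqP => [_|an0].
  have := @inv_chord R y t y0 t0 t1 => H.
  have := ler_wpM2l (ltW (Hr u b)) H.
  move=> K; apply: le_trans K _; rewrite le_eqVlt; apply/orP; left; apply/eqP; ring.
case: eqP => [_|an1].
  have := @ln_chord R y t y0 t0 t1; lra.
set k := (1 - alpha)^-1 * powR (r u b) (1 - alpha).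
have -> : (1 - t) * (k * powR y (alpha - 1)) + t * (k * powR (y + 1) (alpha - 1))
  = k * ((1 - t) * powR y (alpha - 1) + t * powR (y + 1) (alpha - 1)) by ring.
have pr : 0 < powR (r u b) (1 - alpha) by apply: powR_gt0.
case: (ltrP alpha 1) => [alt1|age1].
  have k0 : 0 <= k by rewrite /k; apply: mulr_ge0 => //; [rewrite invr_ge0; lra | lra].
  apply: ler_wpM2l => //; apply: powR_chord_neg => //; lra.
have agt1 : 1 < alpha by rewrite lt_neqAle age1 andbT eq_sym; apply/eqP.
have k0 : k <= 0.
  rewrite /k; apply: mulr_le0_ge0; [rewrite invr_le0; lra | lra].
apply: ler_wnM2l => //; apply: powR_chord_pos => //; lra.
Qed.
End Phi.
Arguments phiG {R U B}.
Arguments chord_phiG {R U B alpha r}.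

Theorem theorem2 (R : realType) (U B : finType)
    (HU : (0 < #|U|)%N) (HB : (0 < #|B|)%N)
    (r : U -> B -> R) (Hr : forall u b, 0 < r u b)
    (alpha : R) (Ha0 : 0 <= alpha) (Ha2 : alpha <= 2) :
  (exists z, is_argmax (@in_Z R U B) (G alpha r) z) /\
  (exists x, is_argmax (@in_X R U B) (G alpha r) x) /\
  (forall z x, is_argmax (@in_Z R U B) (G alpha r) z ->
               is_argmax (@in_X R U B) (G alpha r) x ->
               G alpha r z = G alpha r x).
Proof.
case/card_gt0P: HB => b0 _.
have Hc := chord_phiG Hr Ha0 Ha2.
have core : forall x, in_X x -> exists z, in_Z z /\ G alpha r x <= G alpha r z.
  move=> x Hx.
  have [x' [Hx' Hle Hu]] := @iter_step R U B (phiG alpha r) b0 Hc (enum U) x Hx.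
  exists x'; split; last by rewrite !G_GF.
  by apply: unit_inZ => u; apply: Hu; rewrite mem_enum.
have [zs [Hzs Hmax]] := @Zmax R U B (G alpha r) b0.
split; first by exists zs.
split.
  exists zs; split; first exact: inZ_inX.
  move=> w Hw; have [z [Hz Hle]] := core w Hw.
  exact: le_trans Hle (Hmax z Hz).
move=> z x [Hz Hzm] [Hx Hxm].
apply/eqP; rewrite eq_le; apply/andP; split.
  exact: Hxm (inZ_inX Hz).
have [z' [Hz' Hle]] := core x Hx.
exact: le_trans Hle (Hzm z' Hz').
Qed.
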